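(* Let $k$ be a commutative ring and let $H$ be an FH-algebra over $k$ with FH-homomorphism $f$ and right norm $t$ (so $f(tx)=\epsilon(x)$ for all $x\in H$). Let $b\in H$ be the right distinguished group-like element, i.e. the element with $gf=g(b)f$ for every $g\in H^*$. Then $$\sum t_2\otimes t_1=\sum b^{-1}S^2(t_1)\otimes t_2 \quad\text{in } H\otimes_k H,$$ where $\Delta(t)=\sum t_1\otimes t_2$ and $S$ is the antipode.
   Context: An FH-algebra over a commutative ring $k$ is a $k$-bialgebra $H$ which is a Frobenius algebra ($H$ finitely generated projective over $k$ and there are $f\in H^*=\mathrm{Hom}_k(H,k)$ and $x_i,y_i\in H$ with $\sum_i x_i f(y_ia)=a=\sum_i f(ax_i)y_i$ for all $a\in H$) whose Frobenius homomorphism $f$ is a right integral in $H^*$, i.e. $\sum f(a_1)a_2=f(a)1$ for all $a\in H$; such $f$ is called an FH-homomorphism. An FH-algebra automatically has a bijective antipode $S$. $H^*$ carries the convolution product $(gh)(x)=\sum g(x_1)h(x_2)$, with unit $\epsilon$. A right norm $t\in H$ (with respect to $f$) is an element with $f(tx)=\epsilon(x)$ for all $x\in H$; it satisfies $ta=\epsilon(a)t$. *)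

(* Defs.v *)
From HB Require Import structures.
From mathcomp Require Import all_boot all_algebra.
Set Implicit Arguments. Unset Strict Implicit. Unset Printing Implicit Defensive.
Import GRing.Theory.
Local Open Scope ring_scope.

(* an element is represented by a finite list of elementary tensors          *)
(* [:: (a1,b1); ...] standing for  a1 (x) b1 + ...  and two lists denote     *)
(* the same tensor iff they are related by the smallest equivalence relation *)
(* compatible with concatenation, commutative, and satisfying bi-additivity, *)
(* k-balancedness and (0 (x) b) = 0.  Since every generator then has an      *)
(* additive inverse ((-a) (x) b), this quotient monoid is exactly the        *)
(* abelian group H (x)_k H.                                                  *)

Section Tensor.
Variables (k : comPzRingType) (H : lmodType k).

Definition tens2 := seq (H * H).

Inductive teq2 : tens2 -> tens2 -> Prop :=
| teq2_refl s : teq2 s s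
| teq2_sym s t : teq2 s t -> teq2 t s
| teq2_trans s t u : teq2 s t -> teq2 t u -> teq2 s u
| teq2_cat s s' t t' : teq2 s s' -> teq2 t t' -> teq2 (s ++ t) (s' ++ t')
| teq2_catC s t : teq2 (s ++ t) (t ++ s)
| teq2_addl a a' b : teq2 [:: (a + a', b)] [:: (a, b); (a', b)]
| teq2_addr a b b' : teq2 [:: (a, b + b')] [:: (a, b); (a, b')]
| teq2_scale (r : k) a b : teq2 [:: (r *: a, b)] [:: (a, r *: b)]
| teq2_zero b : teq2 [:: (0, b)] [::].

Definition tens3 := seq (H * H * H).

Inductive teq3 : tens3 -> tens3 -> Prop :=
| teq3_refl s : teq3 s s
| teq3_sym s t : teq3 s t -> teq3 t s
| teq3_trans s t u : teq3 s t -> teq3 t u -> teq3 s u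
| teq3_cat s s' t t' : teq3 s s' -> teq3 t t' -> teq3 (s ++ t) (s' ++ t')
| teq3_catC s t : teq3 (s ++ t) (t ++ s)
| teq3_add1 a a' b c : teq3 [:: (a + a', b, c)] [:: (a, b, c); (a', b, c)]
| teq3_add2 a b b' c : teq3 [:: (a, b + b', c)] [:: (a, b, c); (a, b', c)]
| teq3_add3 a b c c' : teq3 [:: (a, b, c + c')] [:: (a, b, c); (a, b, c')]
| teq3_scale12 (r : k) a b c : teq3 [:: (r *: a, b, c)] [:: (a, r *: b, c)]
| teq3_scale23 (r : k) a b c : teq3 [:: (a, r *: b, c)] [:: (a, b, r *: c)]
| teq3_zero b c : teq3 [:: (0, b, c)] [::].

End Tensor.

Section FH.
Variables (k : comPzRingType) (H : algType k).

Definition klinear_form (g : H -> k) :=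
  forall (r : k) (a b : H), g (r *: a + b) = r * g a + g b.

Definition klinear_endo (S : H -> H) :=
  forall (r : k) (a b : H), S (r *: a + b) = r *: S a + S b.

(* H is finitely generated projective over k (dual basis characterization) *)
Definition fg_projective :=
  exists n (e : 'I_n -> H) (phi : 'I_n -> H -> k),
    (forall i, klinear_form (phi i)) /\
    forall a, a = \sum_(i < n) phi i a *: e i.

(* Delta : H -> H (x) H given by representatives; epsilon : H -> k *)
Definition is_bialgebra (Delta : H -> tens2 H) (eps : H -> k) :=
  [/\
      (forall (r : k) a b, teq2 (Delta (r *: a + b))
          ([seq (r *: p.1, p.2) | p <- Delta a] ++ Delta b)),
      (forall a b, teq2 (Delta (a * b))
          [seq (p.1 * q.1, p.2 * q.2) | p <- Delta a, q <- Delta b]),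
      teq2 (Delta 1) [:: (1, 1)],
      (forall a, teq3
          (flatten [seq [seq (q.1, q.2, p.2) | q <- Delta p.1] | p <- Delta a])
          (flatten [seq [seq (p.1, q.1, q.2) | q <- Delta p.2] | p <- Delta a]))
    &
    [/\ klinear_form eps, (forall a b, eps (a * b) = eps a * eps b), eps 1 = 1
    & forall a, \sum_(p <- Delta a) eps p.1 *: p.2 = a /\
              \sum_(p <- Delta a) eps p.2 *: p.1 = a]].

Definition is_frobenius_hom (f : H -> k) :=
  klinear_form f /\
  exists n (x y : 'I_n -> H),
    forall a, \sum_(i < n) f (y i * a) *: x i = a /\
              \sum_(i < n) f (a * x i) *: y i = a.

Definition is_right_integral (Delta : H -> tens2 H) (f : H -> k) :=
  forall a, \sum_(p <- Delta a) f p.1 *: p.2 = f a *: 1.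

Definition is_FH_algebra (Delta : H -> tens2 H) (eps : H -> k) (f : H -> k) :=
  [/\ is_bialgebra Delta eps, fg_projective, is_frobenius_hom f
    & is_right_integral Delta f].

Definition is_antipode (Delta : H -> tens2 H) (eps : H -> k) (S : H -> H) :=
  klinear_endo S /\
  forall a, \sum_(p <- Delta a) S p.1 * p.2 = eps a *: 1 /\
            \sum_(p <- Delta a) p.1 * S p.2 = eps a *: 1.

Definition is_right_norm (eps : H -> k) (f : H -> k) (t : H) :=
  forall x, f (t * x) = eps x.

Definition conv (Delta : H -> tens2 H) (g h : H -> k) : H -> k :=
  fun x => \sum_(p <- Delta x) g p.1 * h p.2.

Definition is_right_distinguished (Delta : H -> tens2 H) (f : H -> k) (b : H) :=
  forall g : H -> k, klinear_form g ->
    forall x, conv Delta g f x = g b * f x.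

End FH.

(* Main.v *)
Set Warnings "-notation-overridden,-ambiguous-paths".
Require Import Defs.
From HB Require Import structures.
From mathcomp Require Import all_boot all_algebra ring.
Import GRing.Theory.
Local Open Scope ring_scope.

Section Generic.
Variables (k : comPzRingType) (H : algType k).

Lemma zero_of_add (M : zmodType) (x : M) : x + x = x -> x = 0.
Proof. by move=> h; apply/(@addrI _ x); rewrite addr0. Qed.

Lemma ev2_teq2 (M : zmodType) (B : H -> H -> M) :
  (forall a a' c, B (a + a') c = B a c + B a' c) ->
  (forall a c c', B a (c + c') = B a c + B a c') ->
  (forall (r : k) a c, B (r *: a) c = B a (r *: c)) ->
  forall s s', teq2 s s' -> \sum_(p <- s) B p.1 p.2 = \sum_(p <- s') B p.1 p.2.
Proof.
move=> Hl Hr Hs s s'; elim => //=.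
- by move=> ? ? ? _ -> _ ->.
- by move=> ? ? ? ? _ e1 _ e2; rewrite !big_cat e1 e2.
- by move=> ? ?; rewrite !big_cat /= addrC.
- by move=> a a' c; rewrite !big_cons !big_nil /= Hl !addr0.
- by move=> a c c'; rewrite !big_cons !big_nil /= Hr !addr0.
- by move=> r a c; rewrite !big_seq1 Hs.
- move=> c; rewrite big_seq1 big_nil /=; apply: zero_of_add.
  by rewrite -Hl addr0.
Qed.

Lemma ev3_teq3 (M : zmodType) (F : H -> H -> H -> M) :
  (forall a a' c d, F (a + a') c d = F a c d + F a' c d) ->
  (forall a c c' d, F a (c + c') d = F a c d + F a c' d) ->
  (forall a c d d', F a c (d + d') = F a c d + F a c d') ->
  (forall (r : k) a c d, F (r *: a) c d = F a (r *: c) d) ->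
  (forall (r : k) a c d, F a (r *: c) d = F a c (r *: d)) ->
  forall s s', teq3 s s' -> \sum_(p <- s) F p.1.1 p.1.2 p.2 = \sum_(p <- s') F p.1.1 p.1.2 p.2.
Proof.
move=> H1 H2 H3 S12 S23 s s'; elim => //=.
- by move=> ? ? ? _ -> _ ->.
- by move=> ? ? ? ? _ e1 _ e2; rewrite !big_cat e1 e2.
- by move=> ? ?; rewrite !big_cat /= addrC.
- by move=> *; rewrite !big_cons !big_nil /= H1 !addr0.
- by move=> *; rewrite !big_cons !big_nil /= H2 !addr0.
- by move=> *; rewrite !big_cons !big_nil /= H3 !addr0.
- by move=> *; rewrite !big_seq1 S12.
- by move=> *; rewrite !big_seq1 S23.
- move=> c d; rewrite big_seq1 big_nil /=; apply: zero_of_add.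
  by rewrite -H1 addr0.
Qed.

Lemma lfD (g : H -> k) : klinear_form g -> forall a c, g (a + c) = g a + g c.
Proof. by move=> hg a c; rewrite -[a]scale1r hg mul1r scale1r. Qed.
Lemma lf0 (g : H -> k) : klinear_form g -> g 0 = 0.
Proof. by move=> hg; apply: zero_of_add; rewrite -lfD // addr0. Qed.
Lemma lfZ (g : H -> k) : klinear_form g -> forall r a, g (r *: a) = r * g a.
Proof. by move=> hg r a; rewrite -[r *: a]addr0 hg lf0 // addr0. Qed.
Lemma lf_sum (g : H -> k) (I : Type) (s : seq I) (F : I -> H) :
  klinear_form g -> g (\sum_(i <- s) F i) = \sum_(i <- s) g (F i).
Proof.
move=> hg; elim: s => [|x s IH]; first by rewrite !big_nil lf0.
by rewrite !big_cons lfD // IH.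
Qed.

Lemma leD (g : H -> H) : klinear_endo g -> forall a c, g (a + c) = g a + g c.
Proof. by move=> hg a c; rewrite -[a]scale1r hg !scale1r. Qed.
Lemma le0 (g : H -> H) : klinear_endo g -> g 0 = 0.
Proof. by move=> hg; apply: zero_of_add; rewrite -leD // addr0. Qed.
Lemma leZ (g : H -> H) : klinear_endo g -> forall r a, g (r *: a) = r *: g a.
Proof. by move=> hg r a; rewrite -[r *: a]addr0 hg le0 // addr0. Qed.
Lemma le_sum (g : H -> H) (I : Type) (s : seq I) (F : I -> H) :
  klinear_endo g -> g (\sum_(i <- s) F i) = \sum_(i <- s) g (F i).
Proof.
move=> hg; elim: s => [|x s IH]; first by rewrite !big_nil le0.
by rewrite !big_cons leD // IH.
Qed.

End Generic.
Section Tens.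
Variables (k : comPzRingType) (H : algType k).
Implicit Types (s : tens2 H).

Lemma teq2_catl s t u : teq2 t u -> teq2 (s ++ t) (s ++ u).
Proof. by move=> h; apply: teq2_cat => //; apply: teq2_refl. Qed.
Lemma teq2_catr s t u : teq2 t u -> teq2 (t ++ s) (u ++ s).
Proof. by move=> h; apply: teq2_cat => //; apply: teq2_refl. Qed.

Lemma teq2_map (I : Type) (l : seq I) (F G : I -> H * H) :
  (forall i, teq2 [:: F i] [:: G i]) -> teq2 (map F l) (map G l).
Proof.
move=> h; elim: l => [|i l IH] /=; first exact: teq2_refl.
by apply: (@teq2_cat _ _ [:: F i] [:: G i]).
Qed.

Lemma teq2_zero_list (I : Type) (l : seq I) (Y : I -> H) :
  teq2 [seq (0, Y i) | i <- l] [::].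
Proof.
elim: l => [|i l IH] /=; first exact: teq2_refl.
by apply: (@teq2_cat _ _ [:: (0, Y i)] [::] _ [::]) => //; apply: teq2_zero.
Qed.

Lemma teq2_zero_r (a : H) : teq2 [:: (a, 0)] [::].
Proof.
apply: (@teq2_trans _ _ _ [:: ((0:k) *: a, 0)]).
  by rewrite -{1}(scale0r (0:H)); apply: teq2_sym; apply: teq2_scale.
by rewrite scale0r; apply: teq2_zero.
Qed.

Lemma teq2_split_r (I : Type) (l : seq I) (u : H) (W : I -> H) :
  teq2 [:: (u, \sum_(i <- l) W i)] [seq (u, W i) | i <- l].
Proof.
elim: l => [|i l IH] /=; first by rewrite big_nil; apply: teq2_zero_r.
rewrite big_cons; apply: teq2_trans; first by apply: teq2_addr.
by apply: (@teq2_cat _ _ [:: (u, W i)] [:: (u, W i)]) => //; apply: teq2_refl.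
Qed.

Lemma teq2_move s g t : teq2 (s ++ g :: t) (g :: s ++ t).
Proof.
rewrite -cat1s catA -[g :: s ++ t]cat1s catA.
by apply: teq2_catr; apply: teq2_catC.
Qed.

Lemma teq2_merge (I : Type) (l : seq I) (F G Y : I -> H) :
  teq2 ([seq (F i, Y i) | i <- l] ++ [seq (G i, Y i) | i <- l])
       [seq (F i + G i, Y i) | i <- l].
Proof.
elim: l => [|i l IH] /=; first exact: teq2_refl.
apply: (@teq2_trans _ _ _ ([:: (F i, Y i); (G i, Y i)] ++
   ([seq (F i, Y i) | i <- l] ++ [seq (G i, Y i) | i <- l]))).
  by rewrite -[X in teq2 X _]cat1s; apply: teq2_catl; apply: teq2_move.
apply: (@teq2_trans _ _ _ ([:: (F i, Y i); (G i, Y i)] ++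
   [seq (F i + G i, Y i) | i <- l])); first by apply: teq2_catl.
rewrite -[X in teq2 _ X]cat1s; apply: teq2_catr; apply: teq2_sym; apply: teq2_addl.
Qed.

Lemma teq2_nf (I : Type) (l : seq I) (Y : I -> H) (c : H -> I -> k) :
  (forall v, v = \sum_(i <- l) c v i *: Y i) ->
  forall s, teq2 s [seq (\sum_(p <- s) c p.2 i *: p.1, Y i) | i <- l].
Proof.
move=> hc; elim => [|p s IH].
  under eq_map => i do rewrite big_nil.
  by apply: teq2_sym; apply: teq2_zero_list.
under eq_map => i do rewrite big_cons.
apply: teq2_trans; last by apply: teq2_merge.
rewrite -cat1s; apply: teq2_cat => //.
case: p => u v /=; rewrite {1}(hc v).
apply: teq2_trans; first by apply: teq2_split_r.
by apply: teq2_map => i; apply: teq2_sym; apply: teq2_scale.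
Qed.

End Tens.

Section Main.
Variables (k : comPzRingType) (H : algType k)
  (Delta : H -> tens2 H) (eps : H -> k) (f : H -> k) (S : H -> H)
  (t b binv : H) (n : nat) (x y : 'I_n -> H).
Hypotheses (fLin : klinear_form f)
  (frob : forall a, \sum_(i < n) f (y i * a) *: x i = a /\
              \sum_(i < n) f (a * x i) *: y i = a)
  (DLin : forall (r : k) a c, teq2 (Delta (r *: a + c))
          ([seq (r *: p.1, p.2) | p <- Delta a] ++ Delta c))
  (DMul : forall a c, teq2 (Delta (a * c))
          [seq (p.1 * q.1, p.2 * q.2) | p <- Delta a, q <- Delta c])
  (D1 : teq2 (Delta 1) [:: (1, 1)])
  (Dco : forall a, teq3
          (flatten [seq [seq (q.1, q.2, p.2) | q <- Delta p.1] | p <- Delta a])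
          (flatten [seq [seq (p.1, q.1, q.2) | q <- Delta p.2] | p <- Delta a]))
  (eLin : klinear_form eps) (eMul : forall a c, eps (a * c) = eps a * eps c)
  (e1 : eps 1 = 1)
  (cou : forall a, \sum_(p <- Delta a) eps p.1 *: p.2 = a /\
              \sum_(p <- Delta a) eps p.2 *: p.1 = a)
  (fint : is_right_integral Delta f)
  (SLin : klinear_endo S)
  (anti : forall a, \sum_(p <- Delta a) S p.1 * p.2 = eps a *: 1 /\
            \sum_(p <- Delta a) p.1 * S p.2 = eps a *: 1)
  (Ht : is_right_norm eps f t)
  (Hb : is_right_distinguished Delta f b)
  (Hbb : b * binv = 1) (Hbb' : binv * b = 1).

Definition bal2 {M : zmodType} (B : H -> H -> M) :=
  [/\ (forall a a' c, B (a + a') c = B a c + B a' c),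
      (forall a c c', B a (c + c') = B a c + B a c') &
      (forall (r : k) a c, B (r *: a) c = B a (r *: c))].

Definition bal3 {M : zmodType} (F : H -> H -> H -> M) :=
  [/\ (forall a a' c d, F (a + a') c d = F a c d + F a' c d),
      (forall a c c' d, F a (c + c') d = F a c d + F a c' d),
      (forall a c d d', F a c (d + d') = F a c d + F a c d'),
      (forall (r : k) a c d, F (r *: a) c d = F a (r *: c) d) &
      (forall (r : k) a c d, F a (r *: c) d = F a c (r *: d))].

Lemma ev2 {M : zmodType} {B : H -> H -> M} : bal2 B ->
  forall s s', teq2 s s' -> \sum_(p <- s) B p.1 p.2 = \sum_(p <- s') B p.1 p.2.
Proof. by case=> *; apply: ev2_teq2. Qed.

Lemma evM {M : zmodType} {B : H -> H -> M} : bal2 B -> forall a c,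
  \sum_(p <- Delta (a * c)) B p.1 p.2 =
  \sum_(p <- Delta a) \sum_(q <- Delta c) B (p.1 * q.1) (p.2 * q.2).
Proof. by move=> hB a c; rewrite (ev2 hB _ _ (DMul a c)) big_allpairs_dep. Qed.

Lemma coass {M : zmodType} {F : H -> H -> H -> M} : bal3 F -> forall a,
  \sum_(p <- Delta a) \sum_(q <- Delta p.1) F q.1 q.2 p.2 =
  \sum_(p <- Delta a) \sum_(q <- Delta p.2) F p.1 q.1 q.2.
Proof.
case=> h1 h2 h3 h4 h5 a; have := @ev3_teq3 _ _ _ _ h1 h2 h3 h4 h5 _ _ (Dco a).
by rewrite !big_flatten !big_map /=; under eq_bigr => i _ do rewrite big_map;
  move=> ->; under eq_bigr => i _ do rewrite big_map.
Qed.

Lemma fD a c : f (a + c) = f a + f c. Proof. exact: lfD. Qed.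
Lemma fZ r a : f (r *: a) = r * f a. Proof. exact: lfZ. Qed.
Lemma f_sum (I : Type) (l : seq I) (F : I -> H) :
  f (\sum_(i <- l) F i) = \sum_(i <- l) f (F i). Proof. exact: lf_sum. Qed.
Lemma eD a c : eps (a + c) = eps a + eps c. Proof. exact: lfD. Qed.
Lemma eZ r a : eps (r *: a) = r * eps a. Proof. exact: lfZ. Qed.
Lemma e_sum (I : Type) (l : seq I) (F : I -> H) :
  eps (\sum_(i <- l) F i) = \sum_(i <- l) eps (F i). Proof. exact: lf_sum. Qed.
Lemma SD a c : S (a + c) = S a + S c. Proof. exact: leD. Qed.
Lemma SZ r a : S (r *: a) = r *: S a. Proof. exact: leZ. Qed.
Lemma S_sum (I : Type) (l : seq I) (F : I -> H) :
  S (\sum_(i <- l) F i) = \sum_(i <- l) S (F i). Proof. exact: le_sum. Qed.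

Lemma elem_eq z z' : (forall a, f (z * a) = f (z' * a)) -> z = z'.
Proof.
move=> h; rewrite -[z](proj2 (frob z)) -[z'](proj2 (frob z')).
by apply: eq_bigr => i _; rewrite h.
Qed.

Lemma rep (g : H -> k) : klinear_form g ->
  forall z, g z = f (z * \sum_(i < n) g (y i) *: x i).
Proof.
move=> hg z; rewrite -[in LHS](proj2 (frob z)) lf_sum // mulr_sumr f_sum.
by apply: eq_bigr => i _; rewrite lfZ // -scalerAr fZ mulrC.
Qed.

Lemma crit s s' :
  (forall a, \sum_(p <- s) f (p.2 * a) *: p.1 = \sum_(p <- s') f (p.2 * a) *: p.1) ->
  teq2 s s'.
Proof.
move=> h.
have hnf := @teq2_nf _ _ _ (index_enum 'I_n) y (fun v i => f (v * x i))
  (fun v => esym (proj2 (frob v))).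
apply: teq2_trans; first exact: hnf s.
apply: teq2_trans; last by apply: teq2_sym; exact: hnf s'.
rewrite (eq_map (g := fun i => (\sum_(p <- s') f (p.2 * x i) *: p.1, y i))); first exact: teq2_refl.
by move=> i; rewrite h.
Qed.

Lemma ft : f t = 1.
Proof. by rewrite -[t]mulr1 Ht e1. Qed.

Lemma tA a : t * a = eps a *: t.
Proof. by apply: elem_eq => c; rewrite -mulrA Ht eMul -scalerAl fZ Ht. Qed.

Lemma lin_fr c : klinear_form (fun u => f (u * c)).
Proof. by move=> r a d /=; rewrite mulrDl -scalerAl fLin. Qed.

Lemma LB z : \sum_(p <- Delta z) f p.2 *: p.1 = f z *: b.
Proof.
apply: elem_eq => c; rewrite mulr_suml f_sum [RHS](@lfZ _ _ _ (lin_fr c)) mulrC.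
have := Hb _ (lin_fr c) z; rewrite /conv /= => <-.
by apply: eq_bigr => p _; rewrite (@lfZ _ _ _ (lin_fr c)) mulrC.
Qed.

Lemma eb : eps b = 1.
Proof.
have := Hb _ eLin t; rewrite /conv ft mulr1 => <-.
by rewrite -[RHS]ft -{2}(proj1 (cou t)) f_sum; apply: eq_bigr => p _; rewrite fZ.
Qed.

Lemma ebinv : eps binv = 1.
Proof. by rewrite -[LHS]mul1r -{1}eb -eMul Hbb e1. Qed.

Lemma conv_lin {g h : H -> k} : klinear_form g -> klinear_form h -> klinear_form (conv Delta g h).
Proof.
move=> hg hh r a c; rewrite /conv.
have hB : bal2 (fun u v => g u * h v).
  by split=> *; rewrite ?lfD ?lfZ // ?mulrDl ?mulrDr //; ring.
rewrite (ev2 hB _ _ (DLin r a c)) big_cat big_map /= mulr_sumr.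
by congr (_ + _); apply: eq_bigr => p _; rewrite lfZ // mulrA.
Qed.

Lemma gl {g h : H -> k} : klinear_form g -> klinear_form h ->
  \sum_(p <- Delta b) g p.1 * h p.2 = g b * h b.
Proof.
move=> hg hh; have e := Hb _ (conv_lin hg hh) t.
rewrite ft mulr1 /conv in e; rewrite -e.
have hF : bal3 (fun a1 a2 a3 => g a1 * h a2 * f a3).
  by split=> *; rewrite ?lfD ?lfZ ?fD ?fZ // ?mulrDl ?mulrDr //; ring.
under eq_bigr => p _ do rewrite mulr_suml.
rewrite (coass hF t).
transitivity (\sum_(p <- Delta t) g p.1 * (h b * f p.2)).
  apply: eq_bigr => p _; have := Hb _ hh p.2; rewrite /conv => <-.
  by rewrite mulr_sumr; apply: eq_bigr => q _; rewrite mulrA.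
have := Hb _ hg t; rewrite /conv ft mulr1 => e2.
under eq_bigr => p _ do rewrite mulrCA.
by rewrite -mulr_sumr e2 mulrC.
Qed.

Lemma bal2_mul {M : zmodType} {B : H -> H -> M} u v : bal2 B ->
  bal2 (fun a c => B (u * a) (v * c)).
Proof.
case=> h1 h2 h3; split=> *; rewrite ?mulrDr ?h1 ?h2 //.
by rewrite -!scalerAr h3.
Qed.

Lemma Db : teq2 (Delta b) [:: (b, b)].
Proof.
apply: crit => a; rewrite big_seq1 /=; apply: elem_eq => c.
rewrite mulr_suml f_sum [RHS](@lfZ _ _ _ (lin_fr c)) mulrC.
rewrite -(gl (lin_fr c) (lin_fr a)) /=.
by apply: eq_bigr => p _; rewrite (@lfZ _ _ _ (lin_fr c)) mulrC.
Qed.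

Lemma Dbinv : teq2 (Delta binv) [:: (binv, binv)].
Proof.
apply: crit => a; rewrite big_seq1 /=.
pose B := fun u v => f (v * binv * a) *: (u * binv).
have hB : bal2 B.
  rewrite /B; split=> *; rewrite ?mulrDl ?fD ?scalerDl ?scalerDr //.
  by rewrite -!scalerAl fZ !scalerA mulrC.
have e := evM hB binv b; rewrite Hbb' (ev2 hB _ _ D1) big_seq1 /B /= !mul1r in e.
rewrite e; apply: eq_bigr => p _.
rewrite (ev2 (bal2_mul p.1 p.2 hB) _ _ Db) big_seq1 /B /=.
by rewrite -!mulrA Hbb !mulr1 [b * (binv * a)]mulrA Hbb mul1r.
Qed.

Lemma A2 x0 y0 : \sum_(p <- Delta x0) f (p.1 * y0) *: p.2 =
  \sum_(q <- Delta y0) f (x0 * q.1) *: S q.2.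
Proof.
symmetry.
transitivity (\sum_(q <- Delta y0)
    (\sum_(r <- Delta (x0 * q.1)) f r.1 *: r.2) * S q.2).
  by apply: eq_bigr => q _; rewrite fint -scalerAl mul1r.
have hB1 : bal2 (fun u v => f u *: v).
  by split=> *; rewrite ?fD ?scalerDl ?scalerDr // fZ scalerA mulrC -scalerA.
under eq_bigr => q _ do rewrite (evM hB1 x0 q.1).
pose F := fun a1 a2 a3 => \sum_(p <- Delta x0) f (p.1 * a1) *: (p.2 * a2 * S a3).
have hF : bal3 F.
  rewrite /F; split=> *; rewrite -?big_split; apply: eq_bigr => p _;
    rewrite ?mulrDr ?mulrDl ?SD ?mulrDr ?fD ?scalerDl ?scalerDr //.
    by rewrite -scalerAr fZ -scalerAr -scalerAl scalerA mulrC -scalerA.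
  by rewrite SZ -!scalerAr -!scalerAl.
transitivity (\sum_(q <- Delta y0) \sum_(u <- Delta q.1) F u.1 u.2 q.2).
  apply: eq_bigr => q _; rewrite mulr_suml exchange_big /F.
  apply: eq_bigr => u _; rewrite mulr_suml; apply: eq_bigr => p _.
  by rewrite -scalerAl.
rewrite (coass hF y0) /F.
transitivity (\sum_(q <- Delta y0) \sum_(p <- Delta x0)
   f (p.1 * q.1) *: (p.2 * (eps q.2 *: 1))).
  apply: eq_bigr => q _; rewrite exchange_big; apply: eq_bigr => p _.
  rewrite -(proj2 (anti q.2)) mulr_sumr scaler_sumr.
  by apply: eq_bigr => w _; rewrite mulrA.
rewrite exchange_big; apply: eq_bigr => p _.
rewrite -[in RHS](proj2 (cou y0)) mulr_sumr f_sum scaler_suml.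
apply: eq_bigr => q _.
by rewrite -[p.1 * (_ *: _)]scalerAr fZ -scalerAr mulr1 scalerA mulrC.
Qed.

Lemma LA a : \sum_(p <- Delta t) f (p.1 * a) *: p.2 = S a.
Proof.
rewrite A2 -[in RHS](proj1 (cou a)) S_sum.
by apply: eq_bigr => q _; rewrite Ht SZ.
Qed.

Definition G c := \sum_(p <- Delta t) f (p.2 * c) *: p.1.

Lemma E1 c : S (G c) * b = c.
Proof.
rewrite /G S_sum mulr_suml.
transitivity (\sum_(p <- Delta t) S p.1 * (f (p.2 * c) *: b)).
  by apply: eq_bigr => p _; rewrite SZ -scalerAl scalerAr.
under eq_bigr => p _ do rewrite -LB.
have hB2 : bal2 (fun u v => f v *: u).
  by split=> *; rewrite ?fD ?scalerDl ?scalerDr // fZ scalerA mulrC.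
under eq_bigr => p _ do rewrite (evM hB2 p.2 c).
pose F := fun a1 a2 a3 => \sum_(u <- Delta c) f (a3 * u.2) *: (S a1 * a2 * u.1).
have hF : bal3 F.
  rewrite /F; split=> *; rewrite -?big_split; apply: eq_bigr => u _;
    rewrite ?SD ?mulrDr ?mulrDl ?fD ?scalerDl ?scalerDr //.
    by rewrite SZ -scalerAr -!scalerAl.
  by rewrite -scalerAl fZ -scalerAr -!scalerAl scalerA mulrC.
transitivity (\sum_(p <- Delta t) \sum_(q <- Delta p.2) F p.1 q.1 q.2).
  apply: eq_bigr => p _; rewrite mulr_sumr /F; apply: eq_bigr => q _.
  rewrite mulr_sumr; apply: eq_bigr => u _.
  by rewrite -scalerAr mulrA.
rewrite -(coass hF t) /F.
transitivity (\sum_(p <- Delta t) \sum_(u <- Delta c) f (p.2 * u.2) *: (eps p.1 *: u.1)).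
  apply: eq_bigr => p _; rewrite exchange_big; apply: eq_bigr => u _.
  rewrite -scaler_sumr -mulr_suml (proj1 (anti p.1)).
  by rewrite -scalerAl mul1r.
rewrite exchange_big -[in RHS](proj2 (cou c)).
apply: eq_bigr => u _; rewrite -Ht -[in RHS](proj1 (cou t)).
rewrite mulr_suml f_sum scaler_suml; apply: eq_bigr => p _.
by rewrite -scalerAl fZ scalerA mulrC.
Qed.

Lemma SG c : S (G c) = c * binv.
Proof. by rewrite -{2}(E1 c) -mulrA Hbb mulr1. Qed.

Lemma GL1 c : \sum_(q <- Delta c) S (q.1 * binv) * q.2 = eps c *: b.
Proof.
have e := proj1 (anti (c * binv)); rewrite eMul ebinv mulr1 in e.
have hB3 : bal2 (fun u v => S u * v).
  by split=> *; rewrite ?SD ?mulrDl ?mulrDr // SZ -scalerAl scalerAr.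
rewrite (evM hB3 c binv) in e.
have e' : \sum_(q <- Delta c) S (q.1 * binv) * (q.2 * binv) = eps c *: 1.
  rewrite -e; apply: eq_bigr => q _.
  by rewrite (ev2 (bal2_mul q.1 q.2 hB3) _ _ Dbinv) big_seq1.
have := congr1 (fun z => z * b) e'; rewrite /= mulr_suml -scalerAl mul1r => <-.
by apply: eq_bigr => q _; rewrite -!mulrA Hbb' mulr1.
Qed.

Lemma GL c : S (c * binv) = b * S c.
Proof.
transitivity (b * S (\sum_(q <- Delta c) eps q.1 *: q.2)); last by rewrite (proj1 (cou c)).
rewrite S_sum mulr_sumr.
transitivity (\sum_(q <- Delta c) \sum_(w <- Delta q.1) S (w.1 * binv) * w.2 * S q.2); last first.
  apply: eq_bigr => q _; rewrite -mulr_suml GL1.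
  by rewrite SZ -scalerAl scalerAr.
pose F := fun a1 a2 a3 => S (a1 * binv) * a2 * S a3.
have hF : bal3 F.
  rewrite /F; split=> *; rewrite ?mulrDl ?SD ?mulrDl ?mulrDr ?mulrDl //.
    by rewrite -scalerAl SZ -!scalerAl -scalerAr -scalerAl.
  by rewrite SZ -scalerAr -scalerAl scalerAr.
rewrite (coass hF c) /F.
rewrite -[in LHS](proj2 (cou c)) mulr_suml S_sum.
apply: eq_bigr => q _.
under eq_bigr => w _ do rewrite -mulrA.
by rewrite -mulr_sumr (proj2 (anti q.2)) -scalerAl SZ -scalerAr mulr1.
Qed.

Theorem main_sec : teq2 [seq (p.2, p.1) | p <- Delta t]
       [seq (binv * S (S p.1), p.2) | p <- Delta t].
Proof.
apply: crit => a; rewrite !big_map /= LA.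
transitivity (binv * S (S (G a))); first by rewrite SG GL mulrA Hbb' mul1r.
rewrite /G !S_sum mulr_sumr; apply: eq_bigr => p _.
by rewrite !SZ scalerAr.
Qed.

End Main.

Theorem mainTheorem1 (k : comPzRingType) (H : algType k)
  (Delta : H -> tens2 H) (eps : H -> k) (f : H -> k) (S : H -> H)
  (t b binv : H) :
  is_FH_algebra Delta eps f ->
  is_antipode Delta eps S ->
  is_right_norm eps f t ->
  is_right_distinguished Delta f b ->
  b * binv = 1 -> binv * b = 1 ->
  teq2 [seq (p.2, p.1) | p <- Delta t]
       [seq (binv * S (S p.1), p.2) | p <- Delta t].
Proof.
move=> [[DLin DMul D1 Dco [eLin eMul e1 cou]] _ [fLin [n [x [y frob]]]] fint]
  [SLin anti] Ht Hb Hbb Hbb'.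
exact: (@main_sec _ _ _ _ _ _ _ _ _ _ _ _ fLin frob DLin DMul D1 Dco eLin eMul e1 cou fint SLin anti Ht Hb Hbb Hbb').
Qed.
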